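(* Let $\mathcal G=(V_{\min},V_{\max},E,w,\lambda)$ be a discounted payoff game. Consider the following procedure: choose an arbitrary joint strategy $\sigma$; then repeat: compute an optimal solution $\nu$ for $f_\sigma$ (a basis valuation of $H$ minimising $f_\sigma$ over all solutions of $H$); if $f_\sigma(\nu)=0$, return $\nu$; otherwise replace $\sigma$ by an arbitrary joint strategy that is better than $\sigma$. Then, for every choice of the initial joint strategy and of the better strategies, the procedure terminates, and the returned valuation is $\mathrm{val}(\mathcal G)$.
   Context: A discounted payoff game (DPG) is a tuple $\mathcal G=(V_{\min},V_{\max},E,w,\lambda)$ where $V=V_{\min}\cup V_{\max}$ is a finite set of vertices partitioned into disjoint sets $V_{\min}$ (player Min) and $V_{\max}$ (player Max), $E\subseteq V\times V$ is such that every vertex has at least one outgoing edge, $w:E\to\mathbb R$ and $\lambda:E\to[0,1)$ (write $w_e,\lambda_e$). The outcome of an infinite play $e_0e_1\ldots$ is $\sum_{i\ge0}w_{e_i}\prod_{j<i}\lambda_{e_j}$. A joint strategy is a map $\sigma:V\to V$ with $(v,\sigma(v))\in E$ for all $v$ (its restrictions to $V_{\min},V_{\max}$ being positional strategies of the two players). The value $\mathrm{val}(\mathcal G)(v)$ is $\sup_{\sigma_{\max}}\inf_{\sigma_{\min}}$ of the outcome of the play from $v$ (positional determinacy holds). $H$ is the system of inequations over $x\in\mathbb R^V$ containing, for each edge $e=(v,v')$, $x(v)\ge w_e+\lambda_e x(v')$ if $v\in V_{\max}$ and $x(v)\le w_e+\lambda_e x(v')$ if $v\in V_{\min}$. $\mathsf{offset}(x,(v,v'))=x(v)-(w_{(v,v')}+\lambda_{(v,v')}x(v'))$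 if $v\in V_{\max}$, and $(w_{(v,v')}+\lambda_{(v,v')}x(v'))-x(v)$ otherwise. For a joint strategy $\sigma$, $f_\sigma(x)=\sum_{v\in V}\mathsf{offset}(x,(v,\sigma(v)))$. A basis of $H$ is a set of $|V|$ inequations of $H$ whose equality versions have a unique common solution; if that solution satisfies $H$ it is the basis valuation. A joint strategy $\sigma'$ is better than $\sigma$ iff $\min\{f_{\sigma'}(x)\mid x \text{ solves } H\}<\min\{f_{\sigma}(x)\mid x\text{ solves } H\}$. *)

(* Defs.v *)
From HB Require Import structures.
From mathcomp Require Import all_boot all_order all_algebra.
From mathcomp Require Import all_classical all_reals all_analysis.
Set Implicit Arguments. Unset Strict Implicit. Unset Printing Implicit Defensive.
Import Order.TTheory GRing.Theory Num.Theory numFieldNormedType.Exports.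
Local Open Scope ring_scope.
Local Open Scope classical_set_scope.

(* V_max = [pred v | isMax G v], V_min = its complement.  Weights w G v v', discounts lam G v v'
   (only relevant on edges). *)
Record dpg (R : realType) (V : finType) := DPG {
  isMax : pred V;
  edge : rel V;
  w : V -> V -> R;
  lam : V -> V -> R }.

Definition wf_dpg (R : realType) (V : finType) (G : dpg R V) : Prop :=
  (forall v, exists v', edge G v v') /\
  (forall v v', edge G v v' -> 0 <= lam G v v' < 1).

Section Game.
Context {R : realType} {V : finType} (G : dpg R V).

Definition joint_strategy (s : V -> V) : Prop := forall v, edge G v (s v).
(* positional strategies of Max / Min (values at other vertices irrelevant) *)
Definition max_strategy (s : V -> V) : Prop := forall v, isMax G v -> edge G v (s v).
Definition min_strategy (s : V -> V) : Prop := forall v, ~~ isMax G v -> edge G v (s v).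
Definition join_strat (smax smin : V -> V) : V -> V :=
  fun v => if isMax G v then smax v else smin v.

Definition play (s : V -> V) (v : V) (i : nat) : V := iter i s v.
Definition outcome_term (s : V -> V) (v : V) (i : nat) : R :=
  w G (play s v i) (play s v i.+1) *
  \prod_(j < i) lam G (play s v j) (play s v j.+1).
Definition outcome (s : V -> V) (v : V) : R :=
  limn (series (outcome_term s v)).

(* val(G)(v) = sup_{sigma_max} inf_{sigma_min} outcome (positional strategies) *)
Definition game_value (v : V) : R :=
  sup [set y | exists smax, max_strategy smax /\
     y = inf [set z | exists smin, min_strategy smin /\
                       z = outcome (join_strat smax smin) v]].

Definition ineq_H (x : V -> R) (v v' : V) : Prop :=
  if isMax G v then x v >= w G v v' + lam G v v' * x v'
  else x v <= w G v v' + lam G v v' * x v'.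
Definition solves_H (x : V -> R) : Prop :=
  forall v v', edge G v v' -> ineq_H x v v'.
Definition eq_H (x : V -> R) (v v' : V) : Prop :=
  x v = w G v v' + lam G v v' * x v'.

Definition offset (x : V -> R) (v v' : V) : R :=
  if isMax G v then x v - (w G v v' + lam G v v' * x v')
  else (w G v v' + lam G v v' * x v') - x v.
Definition f_sigma (s : V -> V) (x : V -> R) : R :=
  \sum_(v : V) offset x v (s v).

Definition is_basis_with_solution (B : {set V * V}) (x : V -> R) : Prop :=
  (forall e, e \in B -> edge G e.1 e.2) /\ #|B| = #|V| /\
  (forall y : V -> R, (forall e, e \in B -> eq_H y e.1 e.2) <-> y = x).
Definition basis_valuation (x : V -> R) : Prop :=
  (exists B, is_basis_with_solution B x) /\ solves_H x.

Definition optimal_for (s : V -> V) (nu : V -> R) : Prop :=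
  basis_valuation nu /\ forall x, solves_H x -> f_sigma s nu <= f_sigma s x.

Definition min_f (s : V -> V) : R := inf [set f_sigma s x | x in solves_H].
Definition better (s' s : V -> V) : Prop := min_f s' < min_f s.

End Game.

(* Main.v *)
Require Import Defs.
From HB Require Import structures.
From mathcomp Require Import all_boot all_order all_algebra.
From mathcomp Require Import all_classical all_reals all_analysis.
From mathcomp Require Import ring lra zify.
Import Order.TTheory GRing.Theory Num.Theory numFieldNormedType.Exports.
Local Open Scope ring_scope.
Local Open Scope classical_set_scope.

Section PartA.
Context {R : realType} {V : finType} (G : dpg R V) (wf : wf_dpg G).

Definition Lmax : R := \big[Order.max/0]_(p : V * V | edge G p.1 p.2) lam G p.1 p.2.

Lemma lam_le_L v u : edge G v u -> lam G v u <= Lmax.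
Proof. by move=> e; exact: (@le_bigmax_cond _ _ _ 0 (v, u) (fun p : V * V => edge G p.1 p.2) (fun p : V * V => lam G p.1 p.2)). Qed.

Lemma Lmax_ge0 : 0 <= Lmax.
Proof. exact: bigmax_ge_id. Qed.

Lemma Lmax_lt1 : Lmax < 1.
Proof.
apply: bigmax_lt => //= p hp; by case/andP: (wf.2 _ _ hp).
Qed.

Lemma lam_ge0 v u : edge G v u -> 0 <= lam G v u.
Proof. by move=> e; case/andP: (wf.2 _ _ e). Qed.

Definition Wmax : R := \big[Order.max/0]_(p : V * V | edge G p.1 p.2) `|w G p.1 p.2|.

Lemma w_le_W v u : edge G v u -> `|w G v u| <= Wmax.
Proof. by move=> e; exact: (@le_bigmax_cond _ _ _ 0 (v, u) (fun p : V * V => edge G p.1 p.2) (fun p : V * V => `|w G p.1 p.2|)). Qed.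

Lemma Wmax_ge0 : 0 <= Wmax.
Proof. exact: bigmax_ge_id. Qed.

Definition Pp (t : V -> V) (v : V) (i : nat) : R :=
  \prod_(j < i) lam G (play t v j) (play t v j.+1).

Lemma playS (t : V -> V) v i : play t v i.+1 = t (play t v i).
Proof. by rewrite /play iterS. Qed.

Lemma PpS t v i : Pp t v i.+1 = Pp t v i * lam G (play t v i) (play t v i.+1).
Proof. by rewrite /Pp big_ord_recr. Qed.

Lemma Pp_bounds t v i : joint_strategy G t -> 0 <= Pp t v i <= Lmax ^+ i.
Proof.
move=> jt; elim: i => [|i /andP[h0 h1]]; first by rewrite /Pp big_ord0 expr0 lexx ler01.
have e : edge G (play t v i) (play t v i.+1) by rewrite playS; apply: jt.
rewrite PpS exprSr; apply/andP; split; first by rewrite mulr_ge0 // lam_ge0.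
by apply: ler_pM => //; [exact: lam_ge0 | exact: lam_le_L].
Qed.

Lemma outcome_term_P t v i : outcome_term G t v i = w G (play t v i) (play t v i.+1) * Pp t v i.
Proof. by []. Qed.

Lemma outcome_cvg t v : joint_strategy G t -> cvgn (series (outcome_term G t v)).
Proof.
move=> jt; apply: normed_cvg.
apply: (@series_le_cvg _ _ (geometric Wmax Lmax)).
- by move=> n /=.
- by move=> n /=; rewrite mulr_ge0 // ?Wmax_ge0 // exprn_ge0 // Lmax_ge0.
- move=> n /=; rewrite outcome_term_P normrM.
  have /andP[h0 h1] := Pp_bounds t v n jt.
  rewrite (ger0_norm h0); apply: ler_pM => //.
  by apply: w_le_W; rewrite playS; apply: jt.
- apply: is_cvg_geometric_series.
  by rewrite ger0_norm ?Lmax_ge0 // Lmax_lt1.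
Qed.

Definition sl (t : V -> V) (x : V -> R) (u : V) : R :=
  w G u (t u) + lam G u (t u) * x (t u) - x u.

Lemma telescope_id t x v n :
  series (outcome_term G t v) n =
  x v - x (play t v n) * Pp t v n + \sum_(i < n) sl t x (play t v i) * Pp t v i.
Proof.
elim: n => [|n IH].
  by rewrite /series /= big_geq // big_ord0 /Pp big_ord0 /play /= mulr1 subrr addr0.
rewrite seriesSr IH big_ord_recr /= PpS.
rewrite outcome_term_P playS /sl.
set P := Pp t v n; set u := play t v n.
ring.
Qed.

Definition Xmax (x : V -> R) : R := \big[Order.max/0]_u `|x u|.

Lemma key_bound t x v : joint_strategy G t ->
  (forall u, 0 <= sl t x u) -> x v <= outcome G t v.
Proof.
move=> jt hsl.
have hb n : x v <= series (outcome_term G t v) n + geometric (Xmax x) Lmax n.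
  rewrite (telescope_id t x) /=.
  have /andP[h0 h1] := Pp_bounds t v n jt.
  have hs : 0 <= \sum_(i < n) sl t x (play t v i) * Pp t v i.
    by apply: sumr_ge0 => i _; rewrite mulr_ge0 //; case/andP: (Pp_bounds t v i jt).
  have hx : x (play t v n) * Pp t v n <= Xmax x * Lmax ^+ n.
    apply: (le_trans (ler_norm _)); rewrite normrM (ger0_norm h0).
    apply: ler_pM => //.
    exact: (@le_bigmax _ _ _ 0 (fun u => `|x u|)).
  lra.
have cg : cvgn (geometric (Xmax x) Lmax).
  by apply/cvg_ex; exists 0; apply: cvg_geometric; rewrite ger0_norm ?Lmax_ge0 // Lmax_lt1.
have c1 := outcome_cvg t v jt.
have g0 : limn (geometric (Xmax x) Lmax) = 0.
  by apply: cvg_lim => //; apply: cvg_geometric; rewrite ger0_norm ?Lmax_ge0 // Lmax_lt1.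
have -> : outcome G t v = limn (series (outcome_term G t v) \+ geometric (Xmax x) Lmax).
  by rewrite limD // g0 addr0.
have H := (@limr_ge nat \oo _ R (x v) (series (outcome_term G t v) \+ geometric (Xmax x) Lmax)).
apply: H; first exact: is_cvgD.
by apply: nearW => n; apply: hb.
Qed.

Lemma key_bound_le t x v : joint_strategy G t ->
  (forall u, sl t x u <= 0) -> outcome G t v <= x v.
Proof.
move=> jt hsl.
have hb n : series (outcome_term G t v) n - geometric (Xmax x) Lmax n <= x v.
  rewrite (telescope_id t x) /=.
  have /andP[h0 h1] := Pp_bounds t v n jt.
  have hs : \sum_(i < n) sl t x (play t v i) * Pp t v i <= 0.
    by apply: sumr_le0 => i _; rewrite mulr_le0_ge0 //; case/andP: (Pp_bounds t v i jt).
  have hx : - (x (play t v n) * Pp t v n) <= Xmax x * Lmax ^+ n.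
    apply: (le_trans (ler_norm _)); rewrite normrN normrM (ger0_norm h0).
    apply: ler_pM => //.
    exact: (@le_bigmax _ _ _ 0 (fun u => `|x u|)).
  lra.
have cg : cvgn (geometric (Xmax x) Lmax).
  by apply/cvg_ex; exists 0; apply: cvg_geometric; rewrite ger0_norm ?Lmax_ge0 // Lmax_lt1.
have c1 := outcome_cvg t v jt.
have g0 : limn (geometric (Xmax x) Lmax) = 0.
  by apply: cvg_lim => //; apply: cvg_geometric; rewrite ger0_norm ?Lmax_ge0 // Lmax_lt1.
have -> : outcome G t v = limn (series (outcome_term G t v) \- geometric (Xmax x) Lmax).
  by rewrite limB // g0 subr0.
have H := (@limr_le nat \oo _ R (x v) (series (outcome_term G t v) \- geometric (Xmax x) Lmax)).
apply: H; first exact: is_cvgB.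
by apply: nearW => n; apply: hb.
Qed.


Definition Cb : R := Wmax / (1 - Lmax).

Lemma outcome_lb t v : joint_strategy G t -> - Cb <= outcome G t v.
Proof.
move=> jt; apply: (key_bound t (fun _ => - Cb)) => // u.
rewrite /sl.
have hL := Lmax_lt1; have hL0 := Lmax_ge0.
have e := jt u.
have hl := lam_le_L _ _ e; have hl0 := lam_ge0 _ _ e; have hw := w_le_W _ _ e.
have hC : Cb * (1 - Lmax) = Wmax by rewrite /Cb divfK // subr_eq0 gt_eqF.
have hC0 : 0 <= Cb by rewrite /Cb divr_ge0 ?Wmax_ge0 // subr_ge0 ltW.
have : - `|w G u (t u)| <= w G u (t u) by rewrite lerNl -normrN ler_norm.
nra.
Qed.

Lemma join_joint smax smin : max_strategy G smax -> min_strategy G smin ->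
  joint_strategy G (join_strat G smax smin).
Proof.
move=> h1 h2 u; rewrite /join_strat; case: ifP => hu; first exact: h1.
by apply: h2; rewrite hu.
Qed.

Lemma game_value_eq s nu : joint_strategy G s -> solves_H G nu ->
  (forall v, nu v = w G v (s v) + lam G v (s v) * nu (s v)) ->
  forall v, nu v = game_value G v.
Proof.
move=> js hH hex v.
have smax_s : max_strategy G s by move=> u _; exact: js.
have smin_s : min_strategy G s by move=> u _; exact: js.
pose Z smax := [set z | exists smin, min_strategy G smin /\
                       z = outcome G (join_strat G smax smin) v].
have Zlb smax : max_strategy G smax -> has_lbound (Z smax).
  move=> hm; exists (- Cb) => z [smin [hs ->]].
  by apply: outcome_lb; apply: join_joint.
have up smax : max_strategy G smax -> outcome G (join_strat G smax s) v <= nu v.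
  move=> hm; apply: key_bound_le; first exact: join_joint.
  move=> u; rewrite /sl /join_strat; case: ifP => hu.
    have := hH _ _ (hm u hu); rewrite /ineq_H hu; lra.
  by rewrite -hex subrr.
have lo smin : min_strategy G smin -> nu v <= outcome G (join_strat G s smin) v.
  move=> hm; apply: key_bound; first exact: join_joint.
  move=> u; rewrite /sl /join_strat; case: ifP => hu.
    by rewrite -hex subrr.
  have := hH _ _ (hm u (negbT hu)); rewrite /ineq_H hu; lra.
have c1 smax : max_strategy G smax -> inf (Z smax) <= nu v.
  move=> hm; apply: le_trans (up _ hm).
  by apply: ge_inf; [exact: Zlb | exists s].
have c2 : inf (Z s) = nu v.
  have eq : outcome G (join_strat G s s) v = nu v.
    by apply/eqP; rewrite eq_le up // lo.
  apply/eqP; rewrite eq_le; apply/andP; split.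
    by rewrite -[X in _ <= X]eq; apply: ge_inf; [exact: Zlb | exists s].
  apply: lb_le_inf; first by exists (nu v), s; rewrite eq.
  by move=> z [smin [hm ->]]; apply: lo.
rewrite /game_value; apply/eqP; rewrite eq_le; apply/andP; split.
  apply: ub_le_sup.
    by exists (nu v) => y [smax [hm ->]]; apply: c1.
  by exists s; split => //; rewrite c2.
apply: ge_sup.
  by exists (nu v), s; split => //; rewrite c2.
by move=> y [smax [hm ->]]; apply: c1.
Qed.

End PartA.

Definition RV (R : realType) (n : nat) := 'M[R]_(1,n).
HB.instance Definition _ (R : realType) (n : nat) := NormedModule.on (RV R n).
HB.instance Definition _ (R : realType) (n : nat) := Complete.on (RV R n).

Section PartC.
Context {R : realType} {n : nat}.

Lemma entry_le_norm (r : 'rV[R]_n) i : `|r 0 i| <= `|r|.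
Proof.
rewrite (_ : `|r| = mx_norm r) // mx_normrE.
exact: (@le_bigmax _ _ _ 0 (fun ij : 'I_1 * 'I_n => `|r ij.1 ij.2|) (0, i)).
Qed.

Lemma norm_le_entries (r : 'rV[R]_n) c : 0 <= c -> (forall i, `|r 0 i| <= c) -> `|r| <= c.
Proof.
move=> c0 h; rewrite (_ : `|r| = mx_norm r) // mx_normrE.
apply: bigmax_le => // [[a b]] _ /=; by rewrite (ord1 a).
Qed.

Lemma banach_rV (f : RV R n -> RV R n) (L : R) : 0 <= L -> L < 1 ->
  (forall a b, `|f a - f b| <= L * `|a - b|) -> exists p, p = f p.
Proof.
move=> L0 L1 hf.
have ctr : is_contraction (totalfun_ [set: RV R n] f : {fun [set: RV R n] >-> [set: RV R n]}).
  exists (NngNum L0); split => //.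
  by move=> [a b] _ /=; apply: hf.
have [p _ hp] := @banach_fixed_point R _ setT (totalfun_ setT f) ctr closedT (ex_intro _ 0 I).
by exists p.
Qed.
End PartC.

Section PartD.
Context {R : realType} {V : finType} (G : dpg R V) (wf : wf_dpg G).

Definition s0 (v : V) : V := odflt v [pick u | edge G v u].

Lemma s0_edge v : edge G v (s0 v).
Proof.
rewrite /s0; case: pickP => //= h.
have [u hu] := wf.1 v; by rewrite h in hu.
Qed.

Definition qv (x : V -> R) (v u : V) : R := w G v u + lam G v u * x u.

Definition best (x : V -> R) (v : V) : V :=
  if isMax G v then Order.arg_max (s0 v) (fun u => edge G v u) (qv x v)
  else Order.arg_min (s0 v) (fun u => edge G v u) (qv x v).

Lemma best_spec x v : edge G v (best x v) /\
  (isMax G v -> forall u, edge G v u -> qv x v u <= qv x v (best x v)) /\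
  (~~ isMax G v -> forall u, edge G v u -> qv x v (best x v) <= qv x v u).
Proof.
rewrite /best; case: ifP => hv.
  case: arg_maxP; first exact: s0_edge.
  by move=> i hi hm; split => //; split => // _ u hu; apply: hm.
case: arg_minP; first exact: s0_edge.
by move=> i hi hm; split => //; split => // _ u hu; apply: hm.
Qed.

Definition Bell (x : V -> R) (v : V) : R := qv x v (best x v).

Lemma Bell_lip x y M : (forall u, `|x u - y u| <= M) ->
  forall v, `|Bell x v - Bell y v| <= Lmax G * M.
Proof.
move=> hM v.
have M0 : 0 <= M by apply: le_trans (hM v).
have hd u : edge G v u -> - (Lmax G * M) <= qv x v u - qv y v u <= Lmax G * M.
  move=> e; rewrite -ler_norml /qv.
  have -> : w G v u + lam G v u * x u - (w G v u + lam G v u * y u) =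
            lam G v u * (x u - y u) by ring.
  rewrite normrM (ger0_norm (lam_ge0 G wf _ _ e)).
  by apply: ler_pM => //; [exact: (lam_ge0 G wf _ _ e) | exact: (lam_le_L G _ _ e)].
have [ex [mx mn]] := best_spec x v.
have [ey [my mn']] := best_spec y v.
rewrite ler_norml /Bell.
have /andP[h1 h2] := hd _ ex; have /andP[h3 h4] := hd _ ey.
case hv: (isMax G v).
  have a1 := mx hv _ ey; have a2 := my hv _ ex.
  apply/andP; split; lra.
have a1 := mn (negbT hv) _ ey; have a2 := mn' (negbT hv) _ ex.
apply/andP; split; lra.
Qed.

Let n := #|V|.
Definition ofr (r : RV R n) (u : V) : R := r 0 (enum_rank u).
Definition tor (x : V -> R) : RV R n := \row_i x (enum_val i).

Lemma exists_fixpoint : exists x : V -> R, forall v, x v = Bell x v.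
Proof.
have [p hp] : exists p, p = tor (Bell (ofr p)).
  apply: (@banach_rV R n (fun r => tor (Bell (ofr r))) (Lmax G)).
  - exact: Lmax_ge0 G.
  - exact: Lmax_lt1 G wf.
  move=> a b; apply: norm_le_entries.
    by rewrite mulr_ge0 // Lmax_ge0.
  move=> i; rewrite !mxE; apply: Bell_lip => u.
  rewrite /ofr; have := entry_le_norm (a - b) (enum_rank u).
  by rewrite !mxE.
exists (ofr p) => v.
by rewrite {1}/ofr {1}hp mxE enum_rankK.
Qed.

Lemma exists_opt_strategy : exists s nu, joint_strategy G s /\ solves_H G nu /\
  (forall v, nu v = w G v (s v) + lam G v (s v) * nu (s v)).
Proof.
have [x hx] := exists_fixpoint.
exists (best x), x; split; [|split].
- by move=> v; have [] := best_spec x v.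
- move=> v u e; rewrite /ineq_H (hx v) /Bell.
  have [_ [mx mn]] := best_spec x v.
  case: ifP => hv; first exact: mx.
  by apply: mn => //; rewrite hv.
- by move=> v; rewrite {1}hx.
Qed.

End PartD.

Section PartE.
Context {R : realType} {V : finType} (G : dpg R V).

Local Notation n := #|V|.
Local Notation N := #|{: V * V}|.

Definition gl (e : V * V) (d : V -> R) : R := d e.1 - lam G e.1 e.2 * d e.2.

Definition tov (x : V -> R) : 'rV[R]_n := \row_i x (enum_val i).
Definition ofv (r : 'rV[R]_n) (u : V) : R := r 0 (enum_rank u).

Lemma ofvK r : tov (ofv r) = r.
Proof. by apply/rowP => i; rewrite mxE /ofv enum_valK. Qed.

Lemma tovK x : ofv (tov x) = x.
Proof. by apply: funext => u; rewrite /ofv mxE enum_rankK. Qed.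

Definition arow (e : V * V) : 'rV[R]_n :=
  \row_i ((enum_val i == e.1)%:R - lam G e.1 e.2 * (enum_val i == e.2)%:R).

Lemma sum_delta (a : V) (F : V -> R) : \sum_u (u == a)%:R * F u = F a.
Proof.
rewrite (bigD1 a) //= eqxx mul1r big1 ?addr0 // => u /negbTE ->.
by rewrite mul0r.
Qed.

Lemma sum_ord_V (F : V -> R) : \sum_(i < n) F (enum_val i) = \sum_u F u.
Proof.
rewrite (reindex (@enum_rank V)) /=; last first.
  by apply: onW_bij; exact: enum_rank_bij.
by apply: eq_bigr => u _; rewrite enum_rankK.
Qed.

Lemma dot_arow e x : (arow e *m (tov x)^T) 0 0 = gl e x.
Proof.
rewrite mxE.
under eq_bigr do rewrite !mxE.
rewrite (sum_ord_V (fun u => ((u == e.1)%:R - lam G e.1 e.2 * (u == e.2)%:R) * x u)).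
under eq_bigr do rewrite mulrBl -mulrA.
rewrite sumrB sum_delta -mulr_sumr.
under eq_bigr do rewrite mulrC.
rewrite (_ : \sum_i x i * (i == e.2)%:R = \sum_i (i == e.2)%:R * x i); last first.
  by apply: eq_bigr => i _; rewrite mulrC.
by rewrite sum_delta.
Qed.

Definition Amat (T : pred (V * V)) : 'M[R]_(N, n) :=
  \matrix_(k, i) if T (enum_val k) then arow (enum_val k) 0 i else 0.

Lemma Amat_mul (T : pred (V * V)) x k : (Amat T *m (tov x)^T) k 0 =
  if T (enum_val k) then gl (enum_val k) x else 0.
Proof.
rewrite -dot_arow; case: ifP => hT; rewrite !mxE.
  by apply: eq_bigr => i _; rewrite !mxE hT.
by rewrite big1 // => i _; rewrite !mxE hT mul0r.
Qed.

Lemma ker_exists (T : pred (V * V)) : (\rank (Amat T) < n)%N ->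
  exists d : V -> R, (exists u, d u != 0) /\ forall e, T e -> gl e d = 0.
Proof.
move=> hr.
pose K := kermx (Amat T)^T.
have hK : K != 0.
  rewrite -mxrank_eq0 mxrank_ker mxrank_tr.
  by rewrite subn_eq0 -ltnNge.
have [j hj] : exists j, row j K != 0.
  apply/existsP; apply: contraR hK; rewrite negb_exists => /forallP h.
  apply/eqP/row_matrixP => j; rewrite row0; apply/eqP; move: (h j); by rewrite negbK.
pose r := row j K.
have hr0 : r *m (Amat T)^T = 0 by rewrite /r -row_mul mulmx_ker row0.
exists (ofv r); split.
  have [i hi] : exists i, r 0 i != 0.
    apply/existsP; apply: contraR hj; rewrite negb_exists => /forallP h.
    apply/eqP/rowP => i; move: (h i); rewrite negbK => /eqP ->; by rewrite mxE.
  by exists (enum_val i); rewrite /ofv enum_valK.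
move=> e he.
have := Amat_mul T (ofv r) (enum_rank e).
rewrite enum_rankK he ofvK => <-.
by rewrite -(trmxK (Amat T)) -trmx_mul hr0 !mxE.
Qed.

Lemma Amat_mul0 (T : pred (V * V)) d : (forall e, T e -> gl e d = 0) -> Amat T *m (tov d)^T = 0.
Proof.
move=> h; apply/matrixP => k j; rewrite (ord1 j) Amat_mul mxE.
by case: ifP => // /h.
Qed.

Lemma rank_incr (T T' : pred (V * V)) d e0 : (forall e, T e -> T' e) ->
  (forall e, T e -> gl e d = 0) -> T' e0 -> gl e0 d != 0 ->
  (\rank (Amat T) < \rank (Amat T'))%N.
Proof.
move=> hTT' hd hT0 hg.
apply: rank_ltmx; rewrite ltmxE; apply/andP; split.
  apply/row_subP => k.
  case hk: (T (enum_val k)).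
    have -> : row k (Amat T) = row k (Amat T').
      by apply/rowP => i; rewrite !mxE hk hTT'.
    exact: row_sub.
  have -> : row k (Amat T) = 0 by apply/rowP => i; rewrite !mxE hk.
  exact: sub0mx.
apply/negP => /row_subP /(_ (enum_rank e0)) /submxP [D hD].
have := congr1 (fun M => (M *m (tov d)^T) 0 0) hD.
rewrite /= -row_mul -mulmxA (Amat_mul0 T d hd) mulmx0 mxE Amat_mul enum_rankK hT0.
by rewrite mxE => h; move: hg; rewrite h eqxx.
Qed.

Lemma full_rank_basis (T : pred (V * V)) x : \rank (Amat T) = n ->
  (forall e, T e -> edge G e.1 e.2 /\ eq_H G x e.1 e.2) ->
  exists B, is_basis_with_solution G B x.
Proof.
move=> hr hT.
pose f := maxrankfun (Amat T).
pose K := rowsub f (Amat T).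
have hfree : row_free K by exact: maxrowsub_free.
have finj : injective f by exact: maxrankfun_inj.
have hTf i : T (enum_val (f i)).
  apply/negPn/negP => hn.
  have : row i K = 0 by apply/rowP => j; rewrite !mxE (negbTE hn).
  rewrite rowE => h0.
  have := row_free_inj hfree (etrans h0 (esym (mul0mx _ K))).
  move/matrixP/(_ 0 i); rewrite !mxE eqxx /=.
  by rewrite eqxx; move/eqP; rewrite oner_eq0.
exists [set enum_val (f i) | i in 'I_(\rank (Amat T))]%SET; split; [|split].
- by move=> e /imsetP [i _ ->]; case: (hT _ (hTf i)).
- rewrite card_imset; last by move=> i j /enum_val_inj /finj.
  by rewrite card_ord hr.
move=> y; split; last first.
  by move=> -> e /imsetP [i _ ->]; case: (hT _ (hTf i)).
move=> hy.
have hK : K *m (tov y - tov x)^T = 0.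
  apply/matrixP => i j; rewrite (ord1 j) linearB /= mulmxBr !mxE.
  have h1 := Amat_mul T y (f i); have h2 := Amat_mul T x (f i).
  rewrite !mxE in h1 h2.
  rewrite (_ : \sum_j0 K i j0 * (tov y)^T j0 0 = \sum_j0 Amat T (f i) j0 * (tov y)^T j0 0); last first.
    by apply: eq_bigr => k _; rewrite !mxE.
  rewrite (_ : \sum_j0 K i j0 * (tov x)^T j0 0 = \sum_j0 Amat T (f i) j0 * (tov x)^T j0 0); last first.
    by apply: eq_bigr => k _; rewrite !mxE.
  rewrite h1 h2 hTf.
  have ey : eq_H G y (enum_val (f i)).1 (enum_val (f i)).2.
    by apply: hy; apply/imsetP; exists i.
  have ex : eq_H G x (enum_val (f i)).1 (enum_val (f i)).2 by case: (hT _ (hTf i)).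
  rewrite /gl; rewrite /eq_H in ey ex; rewrite {1}ey {1}ex; ring.
have hKt : row_free K^T by rewrite /row_free mxrank_tr (eqP hfree) hr.
have : (tov y - tov x) *m K^T = 0 *m K^T.
  by rewrite mul0mx -(trmxK (tov y - tov x)) -trmx_mul hK trmx0.
move/(row_free_inj hKt)/eqP; rewrite subr_eq0 => /eqP hyx.
by rewrite -(tovK y) hyx tovK.
Qed.

End PartE.

Section PartF.
Context {R : realType} {V : finType} (G : dpg R V) (wf : wf_dpg G).

Definition sg (v : V) : R := if isMax G v then 1 else -1.

Lemma sg_neq0 v : sg v != 0.
Proof. by rewrite /sg; case: ifP => _; rewrite ?oppr_eq0 oner_eq0. Qed.

Lemma offsetE x v u : offset G x v u = sg v * (gl G (v, u) x - w G v u).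
Proof. by rewrite /offset /sg /gl /=; case: ifP => _; ring. Qed.

Definition hh (e : V * V) (d : V -> R) : R := sg e.1 * gl G e d.

Definition xtd (x : V -> R) (t : R) (d : V -> R) : V -> R := fun u => x u + t * d u.

Lemma offset_move x t d v u :
  offset G (xtd x t d) v u = offset G x v u + t * hh (v, u) d.
Proof. by rewrite !offsetE /hh /gl /xtd /=; ring. Qed.

Definition phi (s : V -> V) (d : V -> R) : R := \sum_v hh (v, s v) d.

Lemma f_move s x t d : f_sigma G s (xtd x t d) = f_sigma G s x + t * phi s d.
Proof.
rewrite /f_sigma /phi mulr_sumr -big_split /=.
by apply: eq_bigr => v _; rewrite offset_move.
Qed.

Lemma ineqE x v u : ineq_H G x v u <-> 0 <= offset G x v u.
Proof. by rewrite /ineq_H /offset; case: ifP => _; rewrite subr_ge0. Qed.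

Lemma f_ge0 s x : joint_strategy G s -> solves_H G x -> 0 <= f_sigma G s x.
Proof.
move=> js hx; apply: sumr_ge0 => v _; apply/ineqE; exact: hx.
Qed.

Definition scal (c : R) (d : V -> R) : V -> R := fun u => c * d u.

Lemma gl_scal c d e : gl G e (scal c d) = c * gl G e d.
Proof. by rewrite /gl /scal; ring. Qed.

Lemma hh_scal c d e : hh e (scal c d) = c * hh e d.
Proof. by rewrite /hh gl_scal; ring. Qed.

Lemma phi_scal s c d : phi s (scal c d) = c * phi s d.
Proof. by rewrite /phi mulr_sumr; apply: eq_bigr => v _; rewrite hh_scal. Qed.

Lemma pointed d : (forall v u, edge G v u -> gl G (v, u) d = 0) -> forall u, d u = 0.
Proof.
move=> h u1.
pose u0 := Order.arg_max u1 xpredT (fun u => `|d u|).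
have hm : forall u, `|d u| <= `|d u0|.
  rewrite /u0; case: arg_maxP => // i _ hi u; exact: hi.
have [v' e] := wf.1 u0.
have := h _ _ e; rewrite /gl /= => /eqP; rewrite subr_eq0 => /eqP hu0.
have /andP[l0 l1] := wf.2 _ _ e.
have hle : `|d u0| <= lam G u0 v' * `|d u0|.
  by rewrite {1}hu0 normrM (ger0_norm l0) ler_wpM2l.
have z : `|d u0| = 0.
  apply/eqP; rewrite eq_le normr_ge0 andbT.
  have : 0 <= `|d u0| := normr_ge0 _.
  nra.
apply/eqP; rewrite -normr_eq0 eq_le normr_ge0 andbT -z; exact: hm.
Qed.

Section Move.
Context (s : V -> V) (js : joint_strategy G s).

Lemma move_core x d : solves_H G x -> phi s d <= 0 ->
  (exists v u, edge G v u /\ hh (v, u) d < 0) ->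
  exists x', solves_H G x' /\ f_sigma G s x' <= f_sigma G s x /\
    (forall v u, gl G (v, u) d = 0 -> offset G x' v u = offset G x v u) /\
    exists v u, edge G v u /\ offset G x' v u = 0 /\ gl G (v, u) d != 0.
Proof.
move=> hx hphi [v0 [u0 [e0 h0]]].
pose J := fun e : V * V => edge G e.1 e.2 && (hh e d < 0).
pose ratio := fun e : V * V => offset G x e.1 e.2 / (- hh e d).
have J0 : J (v0, u0) by rewrite /J /= e0 h0.
case: (@arg_minP _ _ _ (v0, u0) J ratio J0) => es /andP[eJ hJ] hmin.
pose t := ratio es.
have hes : 0 < - hh es d by rewrite oppr_gt0.
have t0 : 0 <= t by rewrite /t /ratio divr_ge0 // ?(ltW hes) //; apply/ineqE; exact: hx.
exists (xtd x t d); split; [|split; [|split]].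
- move=> v u e; apply/ineqE; rewrite offset_move.
  have ho : 0 <= offset G x v u by apply/ineqE; exact: hx.
  case: (leP 0 (hh (v, u) d)) => hhv; first by rewrite addr_ge0 // mulr_ge0.
  have Jvu : J (v, u) by rewrite /J /= e hhv.
  have := hmin _ Jvu; rewrite /ratio /= -/t.
  have hp : 0 < - hh (v, u) d by rewrite oppr_gt0.
  rewrite ler_pdivlMr // => ht.
  have ht2 : t * - hh (v, u) d <= offset G x v u := ht.
  rewrite mulrN in ht2; lra.
- rewrite f_move; have : t * phi s d <= 0 by rewrite mulr_ge0_le0.
  lra.
- by move=> v u hg; rewrite offset_move /hh hg mulr0 mulr0 addr0.
- exists es.1, es.2; split => //; split.
    rewrite offset_move /t /ratio -surjective_pairing.
    by field; rewrite -oppr_eq0 (gt_eqF hes).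
  apply/eqP => hg; have hg2 : gl G es d = 0 by move: hg; case: (es).
  by move: hes; rewrite /hh hg2 mulr0 oppr0 ltxx.
Qed.

Lemma unbounded x d : solves_H G x -> phi s d < 0 ->
  exists v u, edge G v u /\ hh (v, u) d < 0.
Proof.
move=> hx hphi.
case: (pselect (exists v u, edge G v u /\ hh (v, u) d < 0)) => // hn; exfalso.
have hpos v u : edge G v u -> 0 <= hh (v, u) d.
  move=> e; rewrite leNgt; apply/negP => hlt; by apply: hn; exists v, u.
have f0 := f_ge0 s x js hx.
pose t := f_sigma G s x / (- phi s d) + 1.
have hp : 0 < - phi s d by rewrite oppr_gt0.
have t0 : 0 < t by rewrite /t ltr_wpDl // divr_ge0 // ltW.
have hx' : solves_H G (xtd x t d).
  move=> v u e; apply/ineqE; rewrite offset_move addr_ge0 //.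
    by apply/ineqE; exact: hx.
  by apply: mulr_ge0; [exact: ltW | exact: hpos].
have := f_ge0 s (xtd x t d) js hx'; rewrite f_move.
have -> : f_sigma G s x + t * phi s d = phi s d.
  rewrite /t; field; by rewrite -oppr_eq0 gt_eqF.
by rewrite leNgt hphi.
Qed.

Lemma move_full x d : solves_H G x -> (exists u, d u != 0) ->
  exists x', solves_H G x' /\ f_sigma G s x' <= f_sigma G s x /\
    (forall v u, gl G (v, u) d = 0 -> offset G x' v u = offset G x v u) /\
    exists v u, edge G v u /\ offset G x' v u = 0 /\ gl G (v, u) d != 0.
Proof.
move=> hx [u0 hu0].
suff [c [c0 [hphi hJ]]] : exists c : R, c != 0 /\ phi s (scal c d) <= 0 /\
    exists v u, edge G v u /\ hh (v, u) (scal c d) < 0.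
  have [x' [h1 [h2 [h3 [v [u [e [h4 h5]]]]]]]] := move_core _ _ hx hphi hJ.
  exists x'; split => //; split => //; split.
    by move=> v' u' hg; apply: h3; rewrite gl_scal hg mulr0.
  exists v, u; split => //; split => //.
  by apply/eqP => hg; move/eqP: h5; apply; rewrite gl_scal hg mulr0.
case: (ltrgtP (phi s d) 0) => [hlt|hgt|heq].
- exists 1; split; first exact: oner_neq0.
  rewrite phi_scal mul1r; split; first exact: ltW.
  by apply: (unbounded _ _ hx); rewrite phi_scal mul1r.
- exists (-1); split; first by rewrite oppr_eq0 oner_neq0.
  rewrite phi_scal mulN1r; split; first by rewrite oppr_le0 ltW.
  by apply: (unbounded _ _ hx); rewrite phi_scal mulN1r oppr_lt0.
have [v [u [e hg]]] : exists v u, edge G v u /\ gl G (v, u) d != 0.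
  case: (pselect (exists v u, edge G v u /\ gl G (v, u) d != 0)) => // hn.
  exfalso; move/eqP: hu0; apply; apply: pointed => v u e.
  apply/eqP; apply/negPn/negP => hne; by apply: hn; exists v, u.
have hh0 : hh (v, u) d != 0 by rewrite /hh mulf_neq0 // sg_neq0.
case: (ltrP (hh (v, u) d) 0) => hs.
- exists 1; split; first exact: oner_neq0.
  rewrite phi_scal heq mulr0; split => //.
  by exists v, u; rewrite hh_scal mul1r.
- exists (-1); split; first by rewrite oppr_eq0 oner_neq0.
  rewrite phi_scal heq mulr0; split => //.
  exists v, u; rewrite hh_scal mulN1r oppr_lt0; split => //.
  by rewrite lt_def hh0.
Qed.

Definition tight (x : V -> R) : pred (V * V) :=
  fun e => edge G e.1 e.2 && (offset G x e.1 e.2 == 0).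

Lemma tight_eq x e : tight x e -> edge G e.1 e.2 /\ eq_H G x e.1 e.2.
Proof.
case/andP => he /eqP; rewrite offsetE => /eqP; rewrite mulf_eq0 (negbTE (sg_neq0 _)) /=.
rewrite subr_eq0 /gl /= => /eqP h; split => //; rewrite /eq_H -h; ring.
Qed.

Lemma lp_step k : forall x, solves_H G x -> (#|V| - \rank (Amat G (tight x)) <= k)%N ->
  exists nu, basis_valuation G nu /\ f_sigma G s nu <= f_sigma G s x.
Proof.
elim: k => [|k IH] x hx hk.
  have hr : \rank (Amat G (tight x)) = #|V|.
    by apply/eqP; rewrite eqn_leq rank_leq_col /= -subn_eq0 -leqn0.
  have [B hB] := full_rank_basis G _ _ hr (@tight_eq x).
  by exists x; split => //; split => //; exists B.
case: (ltnP (\rank (Amat G (tight x))) #|V|) => hr; last first.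
  have hr' : \rank (Amat G (tight x)) = #|V| by apply/eqP; rewrite eqn_leq rank_leq_col.
  have [B hB] := full_rank_basis G _ _ hr' (@tight_eq x).
  by exists x; split => //; split => //; exists B.
have [d [hd0 hd]] := ker_exists G _ hr.
have [x' [h1 [h2 [h3 [v [u [e [h4 h5]]]]]]]] := move_full _ _ hx hd0.
have hinc : (\rank (Amat G (tight x)) < \rank (Amat G (tight x')))%N.
  apply: (@rank_incr _ _ G (tight x) (tight x') d (v, u)) => //.
  - move=> [a b] /andP [ha /eqP hb]; apply/andP; split => //=.
    by rewrite h3 ?hb // (hd (a, b)) //; apply/andP; split => //; apply/eqP.
  - by apply/andP; split => //=; apply/eqP.
have hk' : (#|V| - \rank (Amat G (tight x')) <= k)%N.
  have := rank_leq_col (Amat G (tight x')).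
  move: hk hinc; set a := \rank _; set b := \rank _; lia.
have [nu [hnu hf]] := IH x' h1 hk'.
by exists nu; split => //; apply: le_trans h2.
Qed.

Definition PB (B : {set V * V}) : bool :=
  `[< exists x, is_basis_with_solution G B x /\ solves_H G x >].

Definition xB (B : {set V * V}) : V -> R :=
  match pselect (exists x, is_basis_with_solution G B x /\ solves_H G x) with
  | left h => projT1 (cid h)
  | right _ => fun _ => 0
  end.

Lemma xB_spec B : PB B -> is_basis_with_solution G B (xB B) /\ solves_H G (xB B).
Proof.
move/asboolP => h; rewrite /xB; case: pselect => // h'.
exact: (projT2 (cid h')).
Qed.

Lemma basis_uniq B x y : is_basis_with_solution G B x -> is_basis_with_solution G B y -> x = y.
Proof.
move=> [_ [_ hx]] [_ [_ hy]].
by apply: (proj1 (hy x)); apply: (proj2 (hx x)).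
Qed.

Lemma exists_opt : (exists x, solves_H G x) -> exists nu, optimal_for G s nu.
Proof.
move=> [x0 hx0].
have base x : solves_H G x -> exists nu, basis_valuation G nu /\ f_sigma G s nu <= f_sigma G s x.
  by move=> hx; apply: (lp_step #|V|) => //; exact: leq_subr.
have [nu0 [[[B0 hB0] hs0] _]] := base _ hx0.
have P0 : PB B0 by apply/asboolP; exists nu0.
case: (@arg_minP _ _ _ B0 PB (fun B => f_sigma G s (xB B)) P0) => Bm hBm hmin.
have [hb hs] := xB_spec _ hBm.
exists (xB Bm); split; first by split => //; exists Bm.
move=> x hx.
have [nu' [[[B' hB'] hs'] hf]] := base _ hx.
have PB' : PB B' by apply/asboolP; exists nu'.
apply: le_trans (hmin _ PB') _.
have [hb' _] := xB_spec _ PB'.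
by rewrite -(basis_uniq _ _ _ hB' hb').
Qed.

End Move.
End PartF.

Section PartM.
Context {R : realType} {V : finType} (G : dpg R V).

Lemma min_f_eq s x0 : solves_H G x0 ->
  (forall x, solves_H G x -> f_sigma G s x0 <= f_sigma G s x) ->
  min_f G s = f_sigma G s x0.
Proof.
move=> h0 hmin; rewrite /min_f.
have lb : lbound [set f_sigma G s x | x in solves_H G] (f_sigma G s x0).
  by move=> y [x hx <-]; apply: hmin.
apply/eqP; rewrite eq_le; apply/andP; split.
  by apply: ge_inf; [exists (f_sigma G s x0) | exists x0].
by apply: lb_le_inf => //; exists (f_sigma G s x0), x0.
Qed.

Lemma exact_of_f0 s nu : joint_strategy G s -> solves_H G nu -> f_sigma G s nu = 0 ->
  forall v, nu v = w G v (s v) + lam G v (s v) * nu (s v).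
Proof.
move=> js hH hf v.
have hpos : forall u, xpredT u -> 0 <= offset G nu u (s u).
  by move=> u _; apply/ineqE; apply: hH.
have := @psumr_eq0P _ _ xpredT (fun v => offset G nu v (s v)) hpos hf v isT.
rewrite offsetE => /eqP; rewrite mulf_eq0 (negbTE (sg_neq0 _ _)) /=.
by rewrite subr_eq0 /gl /= => /eqP h; rewrite -h; ring.
Qed.

End PartM.

Local Close Scope classical_set_scope.

Theorem corollary3p4 (R : realType) (V : finType) (G : dpg R V) :
  wf_dpg G ->
  (forall s, joint_strategy G s -> exists nu, optimal_for G s nu) /\
  (forall s nu, joint_strategy G s -> optimal_for G s nu -> f_sigma G s nu <> 0 ->
     exists s', joint_strategy G s' /\ better G s' s) /\
  ~ (exists (ss : nat -> V -> V) (nus : nat -> V -> R),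
       forall i, joint_strategy G (ss i) /\ optimal_for G (ss i) (nus i) /\
                 f_sigma G (ss i) (nus i) <> 0 /\ better G (ss i.+1) (ss i)) /\
  (forall s nu, joint_strategy G s -> optimal_for G s nu -> f_sigma G s nu = 0 ->
     forall v, nu v = game_value G v).
Proof.
move=> wf.
have [ss [xs [jss [hxs exs]]]] := exists_opt_strategy G wf.
have fss : f_sigma G ss xs = 0.
  by rewrite /f_sigma big1 // => v _; rewrite /offset (exs v); case: ifP => _; rewrite subrr.
have mss : min_f G ss = 0.
  by rewrite (@min_f_eq _ _ G ss xs) // => x hx; rewrite fss; apply: f_ge0.
split; [|split; [|split]].
- move=> s js; apply: (exists_opt G wf s js); by exists xs.
- move=> s nu js [[_ hnu] hopt] hne; exists ss; split => //.
  rewrite /better mss (@min_f_eq _ _ G s nu) //.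
  by rewrite lt_def; apply/andP; split; [apply/eqP => h; apply: hne | apply: f_ge0].
- move=> [ss' [nus hall]].
  pose m i := min_f G (ss' i).
  have dec i k : m (i + k.+1)%N < m i.
    elim: k => [|k IH]; first by rewrite addn1; case: (hall i) => _ [_ [_]].
    apply: lt_trans IH; rewrite addnS; by case: (hall (i + k.+1)%N) => _ [_ [_]].
  pose g := fun i : 'I_(#|{ffun V -> V}|.+1) => [ffun v => ss' i v].
  have [i [j hij hg]] : exists i : 'I_(#|{ffun V -> V}|.+1), exists2 j : 'I_(#|{ffun V -> V}|.+1), i != j & g i = g j.
    by apply/(injectivePn g)/negP => /injectiveP /leq_card; rewrite card_ord ltnn.
  have eqs : ss' i = ss' j.
    by apply: funext => v; have := congr1 (fun f : {ffun V -> V} => f v) hg; rewrite /g !ffunE.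
  have : m i = m j by rewrite /m eqs.
  case: (ltngtP i j) => hl.
  + have := dec i (j - i.+1)%N; rewrite (_ : (i + (j - i.+1).+1)%N = j); last by lia.
    by move=> h1 h2; move: h1; rewrite h2 ltxx.
  + have := dec j (i - j.+1)%N; rewrite (_ : (j + (i - j.+1).+1)%N = i); last by lia.
    by move=> h1 h2; move: h1; rewrite h2 ltxx.
  + by move: hij; rewrite (val_inj hl) eqxx.
- move=> s nu js [[_ hnu] hopt] hf0.
  apply: (game_value_eq G wf s nu js hnu).
  exact: exact_of_f0.
Qed.
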